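(* A Hausdorff space $(X,\mathcal T)$ is very I-favorable if and only if the family $\{\mathcal P\in[\mathcal T]^{\le\omega}:\mathcal P\subset_!\mathcal T\}$ contains a club $\mathcal C$ with the following properties: (i) every $A\in\mathcal C$ covers $X$ and is closed under finite intersections; (ii) for any two distinct points $x,y\in X$ there exist $A\in\mathcal C$ and disjoint $U_x,U_y\in A$ with $x\in U_x$ and $y\in U_y$; (iii) $\bigcup\mathcal C=\mathcal T$.
   Context: For a family $\mathcal P$ of open subsets of $X$ contained in a family $\mathcal Q$ of open subsets of $X$, write $\mathcal P\subset_!\mathcal Q$ if for every subfamily $\mathcal S\subset\mathcal P$ and every point $x\notin\operatorname{cl}_X\bigcup\mathcal S$ there exists $W\in\mathcal P$ with $x\in W$ and $W\cap\bigcup\mathcal S=\emptyset$. $[\mathcal Q]^{\le\omega}$ denotes the set of all countable subfamilies of $\mathcal Q$. A family $\mathcal C\subset[\mathcal Q]^{\le\omega}$ is a club if (i) for every increasing sequence $C_1\subset C_2\subset\cdots$ of members of $\mathcal C$, $\bigcup_nC_n\in\mathcal C$, and (ii) every $B\in[\mathcal Q]^{\le\omega}$ is contained in some $C\in\mathcal C$. A space $X$ with topology $\mathcal T_X$ is very I-favorable if the family $\{\mathcal P\in[\mathcal T_X]^{\le\omega}:\mathcal P\subset_!\mathcal T_X\}$ contains a club. *)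

(* Defs.v *)
From Stdlib Require Import Classical.

Definition set (X : Type) := X -> Prop.
Definition family (X : Type) := set X -> Prop.

Definition is_topology {X : Type} (T : family X) : Prop :=
  T (fun _ => True) /\ T (fun _ => False) /\
  (forall U V, T U -> T V -> T (fun x => U x /\ V x)) /\
  (forall F : family X, (forall U, F U -> T U) -> T (fun x => exists U, F U /\ U x)).

Definition hausdorff {X : Type} (T : family X) : Prop :=
  forall x y : X, x <> y ->
    exists U V, T U /\ T V /\ U x /\ V y /\ (forall z, U z -> V z -> False).

Definition subfam {X : Type} (P Q : family X) : Prop := forall U, P U -> Q U.

Definition Union {X : Type} (S : family X) : set X := fun x => exists U, S U /\ U x.

Definition closure {X : Type} (T : family X) (A : set X) : set X :=
  fun x => forall U, T U -> U x -> exists y, U y /\ A y.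

Definition countable_fam {X : Type} (P : family X) : Prop :=
  (forall U, ~ P U) \/
  exists f : nat -> set X, (forall n, P (f n)) /\ (forall U, P U -> exists n, f n = U).

Definition ctbl_sub {X : Type} (Q P : family X) : Prop := subfam P Q /\ countable_fam P.

(* P subset_! Q, where T is the topology of X (used for the closure) *)
Definition subset_bang {X : Type} (T : family X) (P Q : family X) : Prop :=
  subfam P Q /\
  forall S : family X, subfam S P ->
    forall x, ~ closure T (Union S) x ->
      exists W, P W /\ W x /\ (forall z, W z -> Union S z -> False).

Definition club {X : Type} (Q : family X) (C : family X -> Prop) : Prop :=
  (forall A, C A -> ctbl_sub Q A) /\
  (forall Cs : nat -> family X,
      (forall n, C (Cs n)) -> (forall n, subfam (Cs n) (Cs (S n))) ->
      C (fun U => exists n, Cs n U)) /\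
  (forall B, ctbl_sub Q B -> exists A, C A /\ subfam B A).

Definition club_in_bang {X : Type} (T : family X) (C : family X -> Prop) : Prop :=
  club T C /\ forall P, C P -> subset_bang T P T.

Definition very_I_favorable {X : Type} (T : family X) : Prop :=
  exists C, club_in_bang T C.

(* Main.v *)
Require Import Defs.
From Stdlib Require Import Classical ClassicalEpsilon FunctionalExtensionality PropExtensionality Cantor Lia PeanoNat.

Definition inter {X : Type} (U V : set X) : set X := fun x => U x /\ V x.

Definition step {X : Type} (A : family X) : family X :=
  fun W => exists U V, A U /\ A V /\ W = inter U V.

Lemma inter_self {X : Type} (U : set X) : inter U U = U.
Proof.
  apply functional_extensionality; intro x; apply propositional_extensionality.
  unfold inter; tauto.
Qed.

Lemma step_incl {X : Type} (A : family X) : subfam A (step A).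
Proof. intros U HU; exists U, U; rewrite inter_self; auto. Qed.

Lemma step_ctbl {X : Type} (T : family X) (A : family X) :
  is_topology T -> ctbl_sub T A -> ctbl_sub T (step A).
Proof.
  intros [_ [_ [HI _]]] [Hs Hc]; split.
  - intros W [U [V [HU [HV ->]]]]; apply HI; auto.
  - destruct Hc as [He | [f [Hf Hsurj]]].
    + left; intros W [U [V [HU _]]]; exact (He U HU).
    + right. exists (fun n => inter (f (fst (Cantor.of_nat n))) (f (snd (Cantor.of_nat n)))).
      split.
      * intro n; exists (f (fst (Cantor.of_nat n))), (f (snd (Cantor.of_nat n))); auto.
      * intros W [U [V [HU [HV ->]]]].
        destruct (Hsurj U HU) as [i <-]; destruct (Hsurj V HV) as [j <-].
        exists (Cantor.to_nat (i, j)); rewrite Cantor.cancel_of_to; reflexivity.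
Qed.

Definition full {X : Type} : set X := fun _ => True.

Lemma add_full_ctbl {X : Type} (T : family X) (B : family X) :
  is_topology T -> ctbl_sub T B -> ctbl_sub T (fun W => B W \/ W = full).
Proof.
  intros [Ht _] [Hs Hc]; split.
  - intros W [HW | ->]; auto.
  - right. destruct Hc as [He | [f [Hf Hsurj]]].
    + exists (fun _ => full); split; [auto|].
      intros U [HU | ->]; [exfalso; exact (He U HU) | exists 0; reflexivity].
    + exists (fun n => match n with 0 => full | S k => f k end); split.
      * intros [|k]; auto.
      * intros U [HU | ->]; [destruct (Hsurj U HU) as [k <-]; exists (S k); reflexivity
                            | exists 0; reflexivity].
Qed.

Section Main.
Context {X : Type} (T : family X) (C : family X -> Prop).

Definition goodC : family X -> Prop :=
  fun A => C A /\ A full /\ (forall U V, A U -> A V -> A (inter U V)).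

Lemma chain_mono (A : nat -> family X) :
  (forall n, subfam (A n) (A (S n))) -> forall m n, m <= n -> subfam (A m) (A n).
Proof.
  intros H m n Hmn; induction Hmn; intros U HU; auto; apply H, IHHmn, HU.
Qed.

Lemma good_club : is_topology T -> club T C -> club T goodC.
Proof.
  intros Htop [H1 [H2 H3]].
  split; [| split].
  - intros A [HA _]; auto.
  - intros Cs HCs Hinc. split; [apply H2; [intro n; apply HCs | exact Hinc]|]. split.
    + exists 0; apply HCs.
    + intros U V [i Hi] [j Hj]. exists (Nat.max i j).
      apply (proj2 (proj2 (HCs _))); [apply (chain_mono Cs Hinc i); [lia | exact Hi] | apply (chain_mono Cs Hinc j); [lia | exact Hj]].
  -
    assert (Hch : forall B : family X, exists A, ctbl_sub T B -> C A /\ subfam B A).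
    { intro B. destruct (classic (ctbl_sub T B)) as [Hb | Hb].
      - destruct (H3 B Hb) as [A HA]; exists A; auto.
      - exists (fun _ => False); tauto. }
    set (F := fun B => proj1_sig (constructive_indefinite_description _ (Hch B))).
    assert (HF : forall B, ctbl_sub T B -> C (F B) /\ subfam B (F B)).
    { intro B; unfold F; destruct (constructive_indefinite_description _ (Hch B)); simpl; auto. }
    intros B HB.
    set (B0 := fun W => B W \/ W = full).
    assert (HB0 : ctbl_sub T B0) by (apply add_full_ctbl; auto).
    set (A := fix A n := match n with 0 => F B0 | S k => F (step (A k)) end).
    assert (HA : forall n, C (A n)).
    { assert (forall n, C (A n) /\ ctbl_sub T (step (A n))).
      { induction n as [|n [IH1 IH2]].
        - assert (C (A 0)) by (apply (HF B0 HB0)). split; auto. apply step_ctbl; auto.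
        - assert (C (A (S n))) by (apply (HF _ IH2)). split; auto. apply step_ctbl; auto. }
      intro n; apply H; auto. }
    assert (Hinc : forall n, subfam (A n) (A (S n))).
    { intros n U HU. simpl. apply (HF _ (step_ctbl T _ Htop (H1 _ (HA n)))).
      apply step_incl; auto. }
    exists (fun U => exists n, A n U). split; [split; [|split]|].
    + apply H2; auto.
    + exists 0. simpl. apply (HF B0 HB0). unfold B0; auto.
    + intros U V [i Hi] [j Hj]. exists (S (Nat.max i j)). simpl.
      apply (HF _ (step_ctbl T _ Htop (H1 _ (HA _)))).
      exists U, V; split; [|split; [|reflexivity]];
        (eapply chain_mono; [exact Hinc| |eauto]; lia).
    + intros U HU; exists 0; simpl; apply (HF B0 HB0); unfold B0; auto.
Qed.

End Main.

Theorem corollary2p6 (X : Type) (T : family X) :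
  is_topology T -> hausdorff T ->
  (very_I_favorable T <->
   exists C : family X -> Prop,
     club_in_bang T C /\
     (* (i) *)
     (forall A, C A ->
        (forall x, exists U, A U /\ U x) /\
        (forall U V, A U -> A V -> A (fun x => U x /\ V x))) /\
     (* (ii) *)
     (forall x y : X, x <> y ->
        exists A, C A /\ exists Ux Uy, A Ux /\ A Uy /\ Ux x /\ Uy y /\
          (forall z, Ux z -> Uy z -> False)) /\
     (* (iii) *)
     (forall U, T U <-> exists A, C A /\ A U)).
Proof.
  intros Htop Hh; split.
  - intros [C [Hclub Hbang]].
    pose proof (good_club T C Htop Hclub) as Hg.
    destruct Hclub as [H1 [H2 H3]].
    exists (goodC C). split; [split; [exact Hg | intros P [HP _]; auto] |].
    split; [| split].
    + intros A [_ [Hf Hi]]; split.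
      * intro x; exists full; split; [auto | exact I].
      * exact Hi.
    + intros x y Hxy. destruct (Hh x y Hxy) as [U [V [HU [HV [Ux [Vy Hd]]]]]].
      destruct Hg as [_ [_ G3]].
      assert (Hc : ctbl_sub T (fun W => W = U \/ W = V)).
      { split. intros W [-> | ->]; auto.
        right; exists (fun n => match n with 0 => U | _ => V end); split.
        intros [|n]; auto. intros W [-> | ->]; [exists 0 | exists 1]; reflexivity. }
      destruct (G3 _ Hc) as [A [HA HBA]].
      exists A; split; auto. exists U, V; repeat split; auto.
    + intro U; split.
      * intro HU. destruct Hg as [_ [_ G3]].
        assert (Hc : ctbl_sub T (fun W => W = U)).
        { split. intros W ->; auto.
          right; exists (fun _ => U); split; auto. intros W ->; exists 0; reflexivity. }
        destruct (G3 _ Hc) as [A [HA HBA]]. exists A; split; auto.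
      * intros [A [[HA _] HAU]]. destruct (H1 A HA) as [Hs _]; auto.
  - intros [C [HC _]]; exists C; exact HC.
Qed.
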